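(* Let $K\ge1$, $T\ge1$ and let $\ell_1,\dots,\ell_T\in[0,1]^K$. Then the regret of AdaHedge satisfies \[ \mathcal{R}^{\mathrm{ah}}_T\le 2\sqrt{V^{\mathrm{ah}}_T\ln K}+\tfrac43\ln K+2. \]
   Context: Hedge setting: $K$ experts; in round $t$ the learner chooses a probability vector $w_t$, then $\ell_t$ is revealed and the learner suffers $h_t=\sum_kw_{t,k}\ell_{t,k}$. Write $L_{t,k}=\sum_{s=1}^t\ell_{s,k}$ ($L_{0,k}=0$), $L^*_t=\min_kL_{t,k}$, $H_T=\sum_{t\le T}h_t$, regret $\mathcal{R}_T=H_T-L^*_T$. Exponential weights with learning rate $\eta\in(0,\infty]$ at time $t$: $w_{t,k}=e^{-\eta L_{t-1,k}}/\sum_je^{-\eta L_{t-1,j}}$ if $\eta<\infty$; for $\eta=\infty$, $w_t$ is uniform on $\{k:L_{t-1,k}=L^*_{t-1}\}$. With learning rate $\eta_t$ in round $t$: mix loss $m_t=-\frac1{\eta_t}\ln\sum_kw_{t,k}e^{-\eta_t\ell_{t,k}}$ if $\eta_t<\infty$, $m_t=L^*_t-L^*_{t-1}$ if $\eta_t=\infty$; mixability gap $\delta_t=h_t-m_t$; loss variance $v_t=\sum_kw_{t,k}(\ell_{t,k}-h_t)^2$. AdaHedge: $\Delta^{\mathrm{ah}}_0=0$; in round $t$, $\eta^{\mathrm{ah}}_t=\ln K/\Delta^{\mathrm{ah}}_{t-1}$ ($=\infty$ if $\Delta^{\mathrm{ah}}_{t-1}=0$), weights are exponential weights with learning rate $\eta^{\mathrm{ah}}_t$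 from $L_{t-1}$, and $\Delta^{\mathrm{ah}}_t=\Delta^{\mathrm{ah}}_{t-1}+\delta^{\mathrm{ah}}_t$. $V^{\mathrm{ah}}_T=\sum_{t=1}^Tv^{\mathrm{ah}}_t$ is the cumulative loss variance of AdaHedge's weights and $\mathcal{R}^{\mathrm{ah}}_T$ its regret. *)

(* Defs.v *)
From HB Require Import structures.
From mathcomp Require Import all_boot all_order all_algebra.
From mathcomp Require Import all_classical all_reals all_analysis.
Set Implicit Arguments. Unset Strict Implicit. Unset Printing Implicit Defensive.
Import Order.TTheory GRing.Theory Num.Theory.
Local Open Scope ring_scope.

Section Hedge.
Variables (R : realType) (K : nat).

(* Minimum of f over the experts 'I_K (0 if K = 0, which never occurs
   under the standing assumption K >= 1). *)
Definition minK (f : 'I_K -> R) : R :=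
  match enum 'I_K with
  | [::] => 0
  | k :: _ => \big[Num.min/f k]_(j <- enum 'I_K) f j
  end.

(* Losses: ell t k is the loss of expert k in round t (rounds t >= 1). *)
Variable ell : nat -> 'I_K -> R.

Definition cumL (t : nat) (k : 'I_K) : R := \sum_(1 <= s < t.+1) ell s k.

Definition Lstar (t : nat) : R := minK (cumL t).

(* Learning rates in (0, oo]: Some eta = finite eta, None = infinity. *)
Definition exp_weights (eta : option R) (Lprev : 'I_K -> R) (k : 'I_K) : R :=
  match eta with
  | Some e => expR (- e * Lprev k) / \sum_(j < K) expR (- e * Lprev j)
  | None =>
      if Lprev k == minK Lprev
      then (#|[set j : 'I_K | Lprev j == minK Lprev]|%:R)^-1 else 0
  end.

Definition hedge_loss (w l : 'I_K -> R) : R := \sum_(k < K) w k * l k.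

Definition mix_loss (t : nat) (eta : option R) (w : 'I_K -> R) : R :=
  match eta with
  | Some e => - e^-1 * ln (\sum_(k < K) w k * expR (- e * ell t k))
  | None => Lstar t - Lstar t.-1
  end.

Definition loss_var (w l : 'I_K -> R) : R :=
  \sum_(k < K) w k * (l k - hedge_loss w l) ^+ 2.

Definition ah_eta_of (D : R) : option R :=
  if D == 0 then None else Some (ln K%:R / D).

Fixpoint ah_Delta (t : nat) : R :=
  match t with
  | 0 => 0
  | t'.+1 =>
      let eta := ah_eta_of (ah_Delta t') in
      let w := exp_weights eta (cumL t') in
      ah_Delta t' + (hedge_loss w (ell t'.+1) - mix_loss t'.+1 eta w)
  end.

Definition ah_eta (t : nat) : option R := ah_eta_of (ah_Delta t.-1).
Definition ah_weights (t : nat) : 'I_K -> R := exp_weights (ah_eta t) (cumL t.-1).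

Definition ah_h (t : nat) : R := hedge_loss (ah_weights t) (ell t).
Definition ah_delta (t : nat) : R := ah_h t - mix_loss t (ah_eta t) (ah_weights t).
Definition ah_v (t : nat) : R := loss_var (ah_weights t) (ell t).

Definition ah_regret (T : nat) : R := \sum_(1 <= t < T.+1) ah_h t - Lstar T.
Definition ah_V (T : nat) : R := \sum_(1 <= t < T.+1) ah_v t.

End Hedge.

(* Main.v *)
Require Import Defs.
From HB Require Import structures.
From mathcomp Require Import all_boot all_order all_algebra.
From mathcomp Require Import all_classical all_reals all_analysis.
From mathcomp Require Import ring lra.
Import Order.TTheory GRing.Theory Num.Theory.
Import numFieldNormedType.Exports.
Set Implicit Arguments. Unset Strict Implicit. Unset Printing Implicit Defensive.
Local Open Scope ring_scope.

Section Scalar.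
Variable R : realType.

Lemma ndecr_deriv (f df : R -> R) (a b : R) :
  (forall x : R, is_derive x (1:R) f (df x)) -> (forall x, a < x < b -> 0 <= df x) ->
  a <= b -> f a <= f b.
Proof.
move=> fd dfp ab.
have cf : continuous f.
  move=> x; apply: differentiable_continuous; apply/derivable1_diffP; by case: (fd x).
apply: (@ger0_derive1_le_cc _ f a b) => //.
- move=> x xab; rewrite derive1E; case: (fd x) => _ ->; apply: dfp; by rewrite in_itv in xab.
- exact: continuous_subspaceT.
- by rewrite in_itv /= lexx ab.
- by rewrite in_itv /= lexx ab.
Qed.

Lemma quad_mono (x y : R) : x <= y ->
  expR x - (1 + x + x ^+ 2 / 2) <= expR y - (1 + y + y ^+ 2 / 2).
Proof.
move=> xy.
apply: (@ndecr_deriv (fun x => expR x - (1 + x + x ^+ 2 / 2)) (fun x => expR x - (1 + x))) => //.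
- move=> z; apply: trigger_derive.
  rewrite /GRing.scale /=; by field.
- move=> z _; rewrite subr_ge0; exact: expR_ge1Dx.
Qed.

Lemma expR_ge_quad (y : R) : 0 <= y -> 1 + y + y ^+ 2 / 2 <= expR y.
Proof.
move=> y0; have := @quad_mono 0 y y0; rewrite expR0 expr0n /= mul0r !addr0 subrr.
by rewrite subr_ge0.
Qed.

Lemma expR_le_quad (y : R) : y <= 0 -> expR y <= 1 + y + y ^+ 2 / 2.
Proof.
move=> y0; have := @quad_mono y 0 y0; rewrite expR0 expr0n /= mul0r !addr0 subrr.
by rewrite subr_le0.
Qed.

Lemma expR_pade (y : R) : 0 <= y -> expR y * (6 - 2 * y) <= 6 + 4 * y + y ^+ 2.
Proof.
move=> y0.
have H : (6 + 4 * 0 + 0 ^+ 2) * expR (- 0) - (6 - 2 * 0) <=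
         (6 + 4 * y + y ^+ 2) * expR (- y) - (6 - 2 * y).
  apply: (@ndecr_deriv (fun x => (6 + 4 * x + x ^+ 2) * expR (- x) - (6 - 2 * x))
                       (fun x => 2 - (2 + 2 * x + x ^+ 2) * expR (- x))) => //.
  - move=> z; apply: trigger_derive.
    rewrite /GRing.scale /=; by field.
  - move=> z /andP[z0 _].
    have := @expR_ge_quad z (ltW z0).
    have ez := expR_gt0 z.
    have -> : expR (- z) = (expR z)^-1 by rewrite expRN.
    move=> q; rewrite subr_ge0 ler_pdivrMr //.
    lra.
move: H; rewrite oppr0 expR0 expr0n /= !mulr0 !addr0 subr0 mulr1 subrr subr_ge0.
have ey := expR_gt0 y.
rewrite expRN => H.
have := ler_wpM2r (ltW ey) H.
by rewrite divfK ?gt_eqF // mulrC.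
Qed.

Lemma expR_bern (e y : R) : 0 < e -> e < 3 -> y <= e ->
  expR y <= 1 + y + y ^+ 2 * (3 / (6 - 2 * e)).
Proof.
move=> e0 e3 ye.
have d0 : 0 < 6 - 2 * e by lra.
have c2 : 2^-1 <= 3 / (6 - 2 * e).
  rewrite ler_pdivlMr // mulrC -ler_pdivlMr //; lra.
have y2 : 0 <= y ^+ 2 by exact: sqr_ge0.
case: (leP y 0) => y0.
  apply: (le_trans (@expR_le_quad y y0)); rewrite lerD2l.
  by rewrite ler_wpM2l.
have := @expR_pade y (ltW y0).
have dy : 0 < 6 - 2 * y by lra.
move=> H.
have H2 : expR y <= (6 + 4 * y + y ^+ 2) / (6 - 2 * y) by rewrite ler_pdivlMr.
apply: (le_trans H2).
have -> : (6 + 4 * y + y ^+ 2) / (6 - 2 * y) = 1 + y + y ^+ 2 * (3 / (6 - 2 * y)).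
  by field; lra.
rewrite lerD2l; apply: ler_wpM2l => //.
rewrite ler_pdivrMr // mulrAC ler_pdivlMr //; lra.
Qed.

Lemma cvx_expR (p z : R) : 0 <= p <= 1 -> expR (p * z) <= 1 + p * (expR z - 1).
Proof.
move=> /andP[p0 p1].
set m := p * z.
have em := expR_gt0 m.
have tang a : expR m * (1 + (a - m)) <= expR a.
  have -> : expR a = expR m * expR (a - m) by rewrite -expRD addrC subrK.
  by rewrite ler_pM2l //; apply: expR_ge1Dx.
have h1 := tang z; have h2 := tang 0.
rewrite expR0 in h2.
have : p * (expR m * (1 + (z - m))) + (1 - p) * (expR m * (1 + (0 - m))) <= p * expR z + (1 - p) * 1.
  apply: lerD; apply: ler_wpM2l => //; lra.
have -> : p * (expR m * (1 + (z - m))) + (1 - p) * (expR m * (1 + (0 - m))) = expR m.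
  rewrite /m; ring.
lra.
Qed.

Lemma ln_ge_of (a x : R) : 0 < a -> expR x <= a -> x <= ln a.
Proof.
move=> a0 h; rewrite -(expRK x) ler_ln // posrE ?expR_gt0 //.
Qed.

Lemma ln_le_of (a x : R) : 0 < a -> a <= expR x -> ln a <= x.
Proof.
move=> a0 h; rewrite -(expRK x) ler_ln // posrE ?expR_gt0 //.
Qed.

Lemma sqrt_bound (D a b : R) : 0 <= D -> 0 <= a -> 0 <= b -> D ^+ 2 <= a + b * D ->
  D <= Num.sqrt a + b.
Proof.
move=> D0 a0 b0 h.
have s0 := sqrtr_ge0 a.
case: (leP D b) => Db; first lra.
have : (D - b) ^+ 2 <= a by nra.
move/ler_wsqrtr; rewrite sqrtr_sqr ger0_norm; lra.
Qed.

End Scalar.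

Section Prob.
Variables (R : realType) (K : nat).
Hypothesis K1 : (0 < K)%N.

Lemma bigmin_le_seq (I : eqType) (f : I -> R) x s j : j \in s ->
  \big[Num.min/x]_(i <- s) f i <= f j.
Proof.
elim: s => //= a s IH; rewrite in_cons big_cons ge_min => /orP[/eqP->|/IH->].
  by rewrite lexx.
by rewrite orbT.
Qed.

Lemma bigmin_ex_seq (I : eqType) (f : I -> R) x s :
  \big[Num.min/x]_(i <- s) f i = x \/
  exists2 j, j \in s & \big[Num.min/x]_(i <- s) f i = f j.
Proof.
elim: s => [|a s IH]; first by left; rewrite big_nil.
rewrite big_cons; set b := \big[Num.min/x]_(i <- s) f i in IH *.
case: (leP (f a) b) => h.
  by right; exists a; rewrite ?mem_head // min_l.
case: IH => [->|[j js ->]]; first by left.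
by right; exists j => //; rewrite in_cons js orbT.
Qed.

Lemma minK_le (f : 'I_K -> R) j : minK f <= f j.
Proof.
rewrite /minK; have := mem_enum 'I_K j; rewrite inE.
case: (enum 'I_K) => // k0 s js.
exact: bigmin_le_seq.
Qed.

Lemma minK_ex (f : 'I_K -> R) : exists k, minK f = f k.
Proof.
rewrite /minK; have := mem_enum 'I_K (Ordinal K1); rewrite inE.
case: (enum 'I_K) => // k0 s _.
case: (bigmin_ex_seq f (f k0) (k0 :: s)) => [->|[j _ ->]]; by eexists.
Qed.

Lemma sum_ge_term (F : 'I_K -> R) k : (forall i, 0 <= F i) -> F k <= \sum_i F i.
Proof.
move=> F0; rewrite (bigD1 k) //= lerDl; exact: sumr_ge0.
Qed.

Lemma ew_ge0 eta (L : 'I_K -> R) k : 0 <= exp_weights eta L k.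
Proof.
case: eta => [e|] /=.
  by apply: divr_ge0; [exact: expR_ge0 | apply: sumr_ge0 => i _; exact: expR_ge0].
by case: ifP => // _; rewrite invr_ge0 ler0n.
Qed.

Lemma ew_sum1 eta (L : 'I_K -> R) : \sum_k exp_weights eta L k = 1.
Proof.
case: eta => [e|] /=.
  rewrite -mulr_suml mulfV // gt_eqF //.
  apply: (lt_le_trans _ (@sum_ge_term (fun i => expR (- e * L i)) (Ordinal K1) _)).
    exact: expR_gt0.
  by move=> i; exact: expR_ge0.
rewrite -big_mkcond /= sumr_const.
have [k0 hk0] := minK_ex L.
have : (0 < #|[set j | L j == minK L]|)%N.
  by apply/card_gt0P; exists k0; rewrite inE hk0.
rewrite cardsE => c0.
apply: (etrans (esym (mulr_natr _ _))); rewrite mulVf // pnatr_eq0 -lt0n. exact: c0.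
Qed.

Lemma jensen_expR (w x : 'I_K -> R) : (forall k, 0 <= w k) -> \sum_k w k = 1 ->
  expR (\sum_k w k * x k) <= \sum_k w k * expR (x k).
Proof.
move=> w0 w1; set c := \sum_k w k * x k.
have ec := expR_gt0 c.
have H : forall k, w k * (expR c * (1 + (x k - c))) <= w k * expR (x k).
  move=> k; apply: ler_wpM2l => //.
  have -> : expR (x k) = expR c * expR (x k - c) by rewrite -expRD addrC subrK.
  by rewrite ler_pM2l //; apply: expR_ge1Dx.
apply: le_trans (ler_sum _ (fun k _ => H k)).
have -> : \sum_k w k * (expR c * (1 + (x k - c))) =
   expR c * (\sum_k w k + \sum_k w k * x k - c * \sum_k w k).
  have -> : \sum_k w k * (expR c * (1 + (x k - c))) =
     \sum_k (expR c * w k + expR c * (w k * x k) - (expR c * c) * w k).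
    by apply: eq_bigr => k _; ring.
  rewrite sumrB big_split /= -!mulr_sumr; ring.
rewrite w1 /c; lra.
Qed.


Section Gap.
Variables (w l : 'I_K -> R) (e : R).
Hypotheses (w0 : forall k, 0 <= w k) (w1 : \sum_k w k = 1)
  (l01 : forall k, 0 <= l k <= 1) (e0 : 0 < e).

Let S := \sum_k w k * expR (- e * l k).
Let h := hedge_loss w l.

Lemma S_ge : expR (- e * h) <= S.
Proof.
have := @jensen_expR w (fun k => - e * l k) w0 w1.
by rewrite /h /hedge_loss mulr_sumr; under eq_bigr => k _ do rewrite mulrCA.
Qed.

Lemma S_gt0 : 0 < S.
Proof. exact: lt_le_trans (expR_gt0 _) S_ge. Qed.

Lemma S_le1 : S <= 1.
Proof.
rewrite -w1; apply: ler_sum => k _.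
rewrite -[X in _ <= X]mulr1; apply: ler_wpM2l => //.
rewrite expR_le1 mulNr oppr_le0; apply: mulr_ge0; first exact: ltW.
by case/andP: (l01 k).
Qed.

Lemma h_le1 : h <= 1.
Proof.
rewrite -w1; apply: ler_sum => k _.
rewrite -[X in _ <= X]mulr1; apply: ler_wpM2l => //.
by case/andP: (l01 k).
Qed.

Lemma h_ge0 : 0 <= h.
Proof.
apply: sumr_ge0 => k _; apply: mulr_ge0 => //; by case/andP: (l01 k).
Qed.

Lemma gap_ge0 : 0 <= h - (- e^-1 * ln S).
Proof.
have H : - e * h <= ln S by apply: ln_ge_of; [exact: S_gt0 | exact: S_ge].
have ei : 0 <= e^-1 by rewrite invr_ge0 ltW.
have := ler_wpM2l ei H.
rewrite mulrA mulrN mulVf ?gt_eqF // mulN1r => H2.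
lra.
Qed.

Lemma gap_le1 : h - (- e^-1 * ln S) <= 1.
Proof.
have H : ln S <= 0 by apply: ln_le_of; [exact: S_gt0 | rewrite expR0; exact: S_le1].
have ei : 0 <= e^-1 by rewrite invr_ge0 ltW.
have := mulr_ge0_le0 ei H.
have := h_le1.
lra.
Qed.

Lemma gap_bern : (h - (- e^-1 * ln S)) * (2 / e - 2 / 3) <= loss_var w l.
Proof.
have v0 : 0 <= loss_var w l.
  by apply: sumr_ge0 => k _; apply: mulr_ge0 => //; exact: sqr_ge0.
case: (leP 3 e) => e3.
  have : 2 / e - 2 / 3 <= 0.
    rewrite subr_le0 ler_pdivrMr // mulrC mulrA ler_pdivlMr //; lra.
  move=> neg; apply: le_trans v0.
  exact: mulr_ge0_le0 gap_ge0 neg.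
set c := 3 / (6 - 2 * e).
have d0 : 0 < 6 - 2 * e by lra.
have c0 : 0 <= c by rewrite /c divr_ge0 // ltW.
set v := loss_var w l.
have HS : S <= expR (- e * h) * (1 + c * e ^+ 2 * v).
  have E1 : S = expR (- e * h) * \sum_k w k * expR (e * (h - l k)).
    rewrite /S mulr_sumr; apply: eq_bigr => k _.
    by rewrite mulrCA -expRD; congr (_ * expR _); ring.
  rewrite E1 ler_pM2l ?expR_gt0 //.
  have B : forall k, w k * expR (e * (h - l k)) <=
                     w k * (1 + e * (h - l k) + (e * (h - l k)) ^+ 2 * c).
    move=> k; apply: ler_wpM2l => //; apply: expR_bern => //.
    have := h_le1; case/andP: (l01 k) => lk0 _ hle.
    have : h - l k <= 1 by lra.
    move=> H1; rewrite -[X in _ <= X]mulr1; apply: ler_wpM2l => //; exact: ltW.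
  apply: le_trans (ler_sum _ (fun k _ => B k)) _.
  have -> : \sum_k w k * (1 + e * (h - l k) + (e * (h - l k)) ^+ 2 * c) =
     \sum_k (w k + (e * h) * w k - e * (w k * l k) + (c * e ^+ 2) * (w k * (l k - h) ^+ 2)).
    by apply: eq_bigr => k _; ring.
  rewrite big_split /= sumrB big_split /= -!mulr_sumr w1.
  rewrite -/(hedge_loss w l) -/h -/(loss_var w l) -/v.
  lra.
have HL : ln S <= - e * h + c * e ^+ 2 * v.
  apply: ln_le_of; first exact: S_gt0.
  apply: (le_trans HS); rewrite expRD ler_pM2l ?expR_gt0 //.
  have := expR_ge1Dx (c * e ^+ 2 * v); lra.
have ei : 0 <= e^-1 by rewrite invr_ge0 ltW.
have := ler_wpM2l ei HL.
have -> : e^-1 * (- e * h + c * e ^+ 2 * v) = - h + c * e * v by field; rewrite gt_eqF.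
move=> H3.
have gle : h - (- e^-1 * ln S) <= c * e * v by lra.
have f0 : 0 <= 2 / e - 2 / 3.
  rewrite subr_ge0 ler_pdivrMr // mulrC mulrA ler_pdivlMr //; lra.
apply: le_trans (ler_wpM2r f0 gle) _.
have -> : c * e * v * (2 / e - 2 / 3) = v by rewrite /c; field; rewrite ?gt_eqF //; lra.
done.
Qed.

End Gap.

End Prob.

Section Phi.
Variables (R : realType) (K : nat) (ell : nat -> 'I_K -> R).
Hypothesis K1 : (0 < K)%N.

Local Notation L := (cumL ell).

Lemma cumL0 k : L 0 k = 0.
Proof. by rewrite /cumL big_geq. Qed.

Lemma cumLS t k : L t.+1 k = L t k + ell t.+1 k.
Proof. by rewrite /cumL big_nat_recr. Qed.

Lemma Lstar0 : Lstar ell 0 = 0.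
Proof. by rewrite /Lstar; have [k ->] := minK_ex K1 (L 0); rewrite cumL0. Qed.

Lemma Lstar_le t k : Lstar ell t <= L t k.
Proof. exact: minK_le. Qed.

Definition Z (t : nat) (x : R) : R := \sum_k expR (- x * L t k).

Lemma Z_gt0 t x : 0 < Z t x.
Proof.
apply: (lt_le_trans _ (@sum_ge_term R K (fun i => expR (- x * L t i)) (Ordinal K1) _)).
  exact: expR_gt0.
by move=> i; exact: expR_ge0.
Qed.

Lemma K_gt0 : 0 < K%:R :> R.
Proof. by rewrite ltr0n. Qed.

Definition Phi (t : nat) (eta : option R) : R :=
  match eta with
  | Some e => - e^-1 * ln (Z t e / K%:R)
  | None => Lstar ell t
  end.

Lemma Phi0 eta : Phi 0 eta = 0.
Proof.
case: eta => [e|] /=; last exact: Lstar0.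
have -> : Z 0 e = K%:R.
  rewrite /Z; under eq_bigr => k _ do rewrite cumL0 mulr0 expR0.
  by rewrite sumr_const card_ord.
by rewrite mulfV ?gt_eqF ?K_gt0 // ln1 mulr0.
Qed.

Lemma mix_Phi t eta :
  mix_loss ell t.+1 eta (exp_weights eta (L t)) = Phi t.+1 eta - Phi t eta.
Proof.
case: eta => [e|] //=.
have -> : \sum_k expR (- e * L t k) / (\sum_j expR (- e * L t j)) * expR (- e * ell t.+1 k)
          = Z t.+1 e / Z t e.
  rewrite /Z mulr_suml; apply: eq_bigr => k _.
  by rewrite mulrAC -expRD cumLS mulrDr.
have z0 := Z_gt0 t e; have z1 := Z_gt0 t.+1 e; have k0 := K_gt0.
rewrite !ln_div ?posrE ?divr_gt0 //; ring.
Qed.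

Lemma Phi_None_le e t : 0 < e -> Phi t None <= Phi t (Some e).
Proof.
move=> e0 /=.
have H : Z t e / K%:R <= expR (- e * Lstar ell t).
  rewrite ler_pdivrMr ?K_gt0 //.
  have -> : expR (- e * Lstar ell t) * K%:R = \sum_(k < K) expR (- e * Lstar ell t).
    by rewrite sumr_const card_ord mulr_natr.
  apply: ler_sum => k _; rewrite ler_expR !mulNr lerN2 ler_pM2l //.
  exact: Lstar_le.
have := ln_le_of (divr_gt0 (Z_gt0 t e) K_gt0) H.
move=> H2.
have ei : 0 <= e^-1 by rewrite invr_ge0 ltW.
have := ler_wpM2l ei H2.
rewrite mulrA mulrN mulVf ?gt_eqF // mulN1r; lra.
Qed.

Lemma Phi_ub e t : 0 < e -> Phi t (Some e) <= Lstar ell t + ln K%:R / e.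
Proof.
move=> e0 /=.
have [k hk] := minK_ex K1 (L t).
have H : expR (- e * Lstar ell t - ln K%:R) <= Z t e / K%:R.
  rewrite expRD expRN lnK ?posrE ?K_gt0 //.
  apply: ler_wpM2r; first by rewrite invr_ge0 ltW ?K_gt0.
  rewrite /Lstar hk.
  exact: (@sum_ge_term R K (fun i => expR (- e * L t i)) k (fun i => expR_ge0 _)).
have := ln_ge_of (divr_gt0 (Z_gt0 t e) K_gt0) H.
move=> H2.
have ei : 0 <= e^-1 by rewrite invr_ge0 ltW.
have := ler_wpM2l ei H2.
have -> : e^-1 * (- e * Lstar ell t - ln K%:R) = - Lstar ell t - ln K%:R / e.
  by field; rewrite gt_eqF.
lra.
Qed.

Lemma Phi_mono e e' t : 0 < e -> e <= e' -> Phi t (Some e') <= Phi t (Some e).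
Proof.
move=> e0 ee' /=.
have e'0 : 0 < e' by exact: lt_le_trans ee'.
set p := e / e'.
have p01 : 0 <= p <= 1.
  apply/andP; split; [exact: divr_ge0 (ltW e0) (ltW e'0) | by rewrite /p ler_pdivrMr // mul1r].
set s := ln (Z t e' / K%:R).
have A0 : 0 < Z t e' / K%:R by rewrite divr_gt0 ?Z_gt0 ?K_gt0.
have es : expR s = Z t e' / K%:R by rewrite /s lnK ?posrE.
have H : Z t e / K%:R <= expR (p * s).
  rewrite ler_pdivrMr ?K_gt0 //.
  have B : forall k, expR (- e * L t k) <=
      expR (p * s) * (1 + p * (expR (- e' * L t k) * expR (- s) - 1)).
    move=> k.
    have -> : expR (- e * L t k) = expR (p * s) * expR (p * (- e' * L t k - s)).
      rewrite -expRD; congr expR; rewrite /p. field. by rewrite gt_eqF.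
    rewrite ler_pM2l ?expR_gt0 //.
    have -> : expR (- e' * L t k) * expR (- s) = expR (- e' * L t k - s) by rewrite -expRD.
    exact: (@cvx_expR _ p _ p01).
  apply: le_trans (ler_sum _ (fun k _ => B k)) _.
  have -> : \sum_(k < K) expR (p * s) * (1 + p * (expR (- e' * L t k) * expR (- s) - 1)) =
    \sum_(k < K) (expR (p * s) * (1 - p) + (expR (p * s) * p * expR (- s)) * expR (- e' * L t k)).
    by apply: eq_bigr => k _; ring.
  rewrite big_split /= sumr_const card_ord -mulr_sumr -/(Z t e').
  have E : expR (- s) * Z t e' = K%:R.
    by rewrite expRN es invf_div divfK // gt_eqF // Z_gt0.
  rewrite -(mulrA _ (expR (- s))) E -mulr_natr.
  by rewrite le_eqVlt; apply/orP; left; apply/eqP; ring.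
have := ln_le_of (divr_gt0 (Z_gt0 t e) K_gt0) H.
move=> H2.
have ei : 0 <= e^-1 by rewrite invr_ge0 ltW.
have := ler_wpM2l ei H2.
have -> : e^-1 * (p * s) = e'^-1 * s by rewrite /p; field; rewrite !gt_eqF.
rewrite -/s; lra.
Qed.

End Phi.

Section Main.
Variables (R : realType) (K : nat) (ell : nat -> 'I_K -> R) (T : nat).
Hypothesis K1 : (0 < K)%N.
Hypothesis hl : forall t k, (1 <= t <= T)%N -> 0 <= ell t k <= 1.

Local Notation D := (ah_Delta ell).
Local Notation L := (cumL ell).

Lemma hlS t k : (t < T)%N -> 0 <= ell t.+1 k <= 1.
Proof. by move=> tT; apply: hl; rewrite ltnS leq0n tT. Qed.

Lemma Lstar_mono t : (t < T)%N -> Lstar ell t <= Lstar ell t.+1.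
Proof.
move=> tT; have [k hk] := minK_ex K1 (L t.+1).
rewrite {2}/Lstar hk cumLS.
have := Lstar_le ell t k; have := hlS k tT; case/andP => h0 _; lra.
Qed.

Lemma round_delta t : (t < T)%N ->
  (forall e, ah_eta_of K (D t) = Some e -> 0 < e) ->
  0 <= ah_delta ell t.+1 <= 1.
Proof.
move=> tT epos; rewrite /ah_delta /ah_h /ah_weights /ah_eta /=.
case E: (ah_eta_of K (D t)) => [e|] /=.
  have e0 := epos e E.
  have w0 := @ew_ge0 R K (Some e) (L t).
  have w1 := @ew_sum1 R K K1 (Some e) (L t).
  have l01 := fun k => hlS k tT.
  have g1 := gap_ge0 (ell t.+1) w0 w1 e0; have g2 := gap_le1 w0 w1 l01 e0.
  apply/andP; split; [exact g1 | exact g2].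
set w := exp_weights None (L t).
have w0 : forall k, 0 <= w k by move=> k; exact: ew_ge0.
have w1 : \sum_k w k = 1 by exact: ew_sum1.
apply/andP; split.
  rewrite subr_ge0 /hedge_loss.
  have -> : Lstar ell t.+1 - Lstar ell t = \sum_k w k * (Lstar ell t.+1 - Lstar ell t).
    by rewrite -mulr_suml w1 mul1r.
  apply: ler_sum => k _.
  rewrite /w /exp_weights; case: eqP => [Hk|_]; last by rewrite !mul0r.
  apply: ler_wpM2l; first by rewrite invr_ge0 ler0n.
  have := Lstar_le ell t.+1 k; rewrite cumLS Hk -/(Lstar ell t); lra.
have := @h_le1 R K w (ell t.+1) w0 w1 (fun k => hlS k tT).
have := Lstar_mono tT.
rewrite /hedge_loss; lra.
Qed.

Lemma round_v t : (t < T)%N -> 0 <= ah_v ell t.+1.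
Proof.
move=> tT; apply: sumr_ge0 => k _; apply: mulr_ge0; last exact: sqr_ge0.
exact: ew_ge0.
Qed.

Lemma round_bern t e : (t < T)%N -> ah_eta_of K (D t) = Some e -> 0 < e ->
  ah_delta ell t.+1 * (2 / e - 2 / 3) <= ah_v ell t.+1.
Proof.
move=> tT E e0; rewrite /ah_delta /ah_h /ah_v /ah_weights /ah_eta /= E /=.
have w0 := @ew_ge0 R K (Some e) (L t).
have w1 := @ew_sum1 R K K1 (Some e) (L t).
exact: (gap_bern w0 w1 (fun k => hlS k tT) e0).
Qed.

Lemma all_eq (k k' : 'I_K) : (K <= 1)%N -> k = k'.
Proof.
move=> K1'; apply: ord_inj.
have := leq_trans (ltn_ord k) K1'; have := leq_trans (ltn_ord k') K1'.
by rewrite !ltnS !leqn0 => /eqP -> /eqP ->.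
Qed.

Lemma round_K1 t : (K <= 1)%N -> D t = 0 -> ah_delta ell t.+1 = 0.
Proof.
move=> Kle Dt; rewrite /ah_delta /ah_h /ah_weights /ah_eta /= Dt /ah_eta_of eqxx /=.
set k0 := Ordinal K1.
set w := exp_weights None (L t).
have w1 : \sum_k w k = 1 by exact: ew_sum1.
rewrite /hedge_loss.
have -> : \sum_k w k * ell t.+1 k = ell t.+1 k0.
  rewrite (eq_bigr (fun k => w k * ell t.+1 k0)); last first.
    by move=> k _; rewrite [in ell t.+1 k](all_eq k k0 Kle).
  by rewrite -mulr_suml w1 mul1r.
have [a ha] := minK_ex K1 (L t.+1); have [b hb] := minK_ex K1 (L t).
rewrite /Lstar ha hb (all_eq a k0 Kle) (all_eq b k0 Kle) cumLS; ring.
Qed.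

End Main.

Section Main2.
Variables (R : realType) (K : nat) (ell : nat -> 'I_K -> R) (T : nat).
Hypothesis K1 : (0 < K)%N.
Hypothesis hl : forall t k, (1 <= t <= T)%N -> 0 <= ell t k <= 1.

Local Notation D := (ah_Delta ell).
Local Notation L := (cumL ell).
Local Notation lnK := (ln (K%:R : R)).

Lemma lnK_ge0 : 0 <= lnK.
Proof. by apply: ln_ge0; rewrite ler1n. Qed.

Lemma lnK_gt0 : (1 < K)%N -> 0 < lnK.
Proof. by move=> K2; apply: ln_gt0; rewrite ltr1n. Qed.

Lemma sum1S (f : nat -> R) t :
  \sum_(1 <= s < t.+2) f s = \sum_(1 <= s < t.+1) f s + f t.+1.
Proof. by rewrite big_nat_recr. Qed.

Lemma sum10 (f : nat -> R) : \sum_(1 <= s < 1) f s = 0.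
Proof. by rewrite big_geq. Qed.

Lemma eta_pos t : 0 <= D t -> ((K <= 1)%N -> D t = 0) ->
  forall e, ah_eta_of K (D t) = Some e -> 0 < e.
Proof.
move=> D0 DK e; rewrite /ah_eta_of; case: eqP => // Dn [<-].
case: (leqP K 1) => Kc; first by case: Dn; exact: DK.
apply: divr_gt0; first exact: lnK_gt0.
by rewrite lt_neqAle eq_sym D0 andbT; apply/eqP.
Qed.

Lemma Delta_props t : (t <= T)%N ->
  [/\ 0 <= D t, ((K <= 1)%N -> D t = 0) &
      D t ^+ 2 <= lnK * ah_V ell t + (2 / 3 * lnK + 1) * D t].
Proof.
elim: t => [|t IH] tT.
  by rewrite /ah_V sum10 /= expr0n /= mulr0 mulr0 addr0; split.
have tT' : (t < T)%N by exact: tT.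
have [D0 DK Dq] := IH (ltnW tT').
have epos := eta_pos D0 DK.
have /andP[d0 d1] := round_delta K1 hl tT' epos.
have v0 := round_v ell tT'.
have DS : D t.+1 = D t + ah_delta ell t.+1 by [].
have VS : ah_V ell t.+1 = ah_V ell t + ah_v ell t.+1 by rewrite /ah_V sum1S.
set d := ah_delta ell t.+1 in d0 d1 DS *; set v := ah_v ell t.+1 in v0 VS *.
have key : 2 * d * D t <= lnK * v + 2 / 3 * lnK * d.
  have l0 := lnK_ge0.
  case: (eqVneq (D t) 0) => Dz.
    rewrite Dz mulr0; apply: addr_ge0; apply: mulr_ge0 => //; apply: mulr_ge0 => //.
  case: (leqP K 1) => Kc; first by case/eqP: Dz; exact: DK.
  have lK := lnK_gt0 Kc.
  have Dp : 0 < D t by rewrite lt_neqAle eq_sym Dz D0.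
  have E : ah_eta_of K (D t) = Some (lnK / D t) by rewrite /ah_eta_of (negbTE Dz).
  have := round_bern K1 hl tT' E (divr_gt0 lK Dp).
  rewrite -/d -/v => B.
  have := ler_wpM2l l0 B.
  have -> : lnK * (d * (2 / (lnK / D t) - 2 / 3)) = 2 * d * D t - 2 / 3 * lnK * d.
    by field; rewrite !gt_eqF.
  lra.
have dd : d ^+ 2 <= d by rewrite expr2 ler_piMl.
split.
- rewrite DS; lra.
- move=> Kle; have := round_K1 K1 Kle (DK Kle); rewrite -/d => dz.
  by rewrite DS (DK Kle) dz addr0.
- rewrite DS VS.
  have -> : (D t + d) ^+ 2 = D t ^+ 2 + 2 * d * D t + d ^+ 2 by ring.
  have -> : lnK * (ah_V ell t + v) + (2 / 3 * lnK + 1) * (D t + d) =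
    (lnK * ah_V ell t + (2 / 3 * lnK + 1) * D t) + (lnK * v + 2 / 3 * lnK * d) + d by ring.
  lra.
Qed.

End Main2.

Section Main3.
Variables (R : realType) (K : nat) (ell : nat -> 'I_K -> R) (T : nat).
Hypothesis K1 : (0 < K)%N.
Hypothesis hl : forall t k, (1 <= t <= T)%N -> 0 <= ell t k <= 1.

Local Notation D := (ah_Delta ell).
Local Notation L := (cumL ell).
Local Notation lnK := (ln (K%:R : R)).

Lemma D_mono t : (t < T)%N -> D t <= D t.+1.
Proof.
move=> tT; have [D0 DK _] := Delta_props K1 hl (ltnW tT).
have /andP[d0 _] := round_delta K1 hl tT (eta_pos D0 DK).
have -> : D t.+1 = D t + ah_delta ell t.+1 by [].
lra.
Qed.

Lemma D_pred_le t : (t <= T)%N -> D t.-1 <= D t.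
Proof. by case: t => [|t] tT //=; exact: D_mono. Qed.

Lemma Phi_cmp t : (t < T)%N -> Phi ell t (ah_eta ell t) <= Phi ell t (ah_eta_of K (D t)).
Proof.
move=> tT.
have -> : ah_eta ell t = ah_eta_of K (D t.-1) by [].
have [D0 DK _] := Delta_props K1 hl (ltnW tT).
have [Dp0 DpK _] := Delta_props K1 hl (leq_trans (leq_pred t) (ltnW tT)).
have mono := D_pred_le (ltnW tT).
rewrite /ah_eta_of; case: (eqVneq (D t) 0) => Dz.
  have Dpz : D t.-1 = 0 by apply/eqP; rewrite eq_le Dp0 andbT -Dz mono.
  by rewrite Dpz eqxx.
case: (leqP K 1) => Kc; first by case/eqP: Dz; exact: DK.
have lK := lnK_gt0 R Kc.
have Dp : 0 < D t by rewrite lt_neqAle eq_sym Dz D0.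
case: (eqVneq (D t.-1) 0) => Dpz.
  apply: Phi_None_le => //; exact: divr_gt0.

have Dpp : 0 < D t.-1 by rewrite lt_neqAle eq_sym Dpz Dp0.
apply: Phi_mono => //; first exact: divr_gt0.
rewrite ler_pdivrMr // mulrAC ler_pdivlMr // ler_pM2l //.
Qed.

Local Notation m s := (mix_loss ell s (ah_eta ell s) (ah_weights ell s)).

Lemma tele t : (t <= T)%N -> \sum_(1 <= s < t.+1) m s <= Phi ell t (ah_eta ell t).
Proof.
elim: t => [|t IH] tT; first by rewrite sum10 Phi0.
have tT' : (t < T)%N by exact: tT.
rewrite sum1S.
have -> : m t.+1 = Phi ell t.+1 (ah_eta_of K (D t)) - Phi ell t (ah_eta_of K (D t)).
  exact: mix_Phi.
have := IH (ltnW tT'); have := Phi_cmp tT'.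
have -> : ah_eta ell t.+1 = ah_eta_of K (D t) by [].
lra.
Qed.

Lemma Delta_sum t : D t = \sum_(1 <= s < t.+1) ah_delta ell s.
Proof.
elim: t => [|t IH]; first by rewrite sum10.
by rewrite sum1S -IH.
Qed.

Lemma v_ge0 s : 0 <= ah_v ell s.
Proof.
apply: sumr_ge0 => k _; apply: mulr_ge0; last exact: sqr_ge0.
exact: ew_ge0.
Qed.

Lemma final_bound : (1 <= T)%N ->
  ah_regret ell T <= 2 * Num.sqrt (ah_V ell T * lnK) + 4 / 3 * lnK + 2.
Proof.
move=> T1.
have HS : \sum_(1 <= s < T.+1) ah_h ell s = \sum_(1 <= s < T.+1) m s + D T.
  rewrite Delta_sum -big_split /=; apply: eq_bigr => s _.
  rewrite /ah_delta; ring.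
have HM := tele (leqnn T).
have HP : Phi ell T (ah_eta ell T) <= Lstar ell T + D T.-1.
  have -> : ah_eta ell T = ah_eta_of K (D T.-1) by [].
  have [Dp0 DpK _] := Delta_props K1 hl (leq_pred T).
  rewrite /ah_eta_of; case: (eqVneq (D T.-1) 0) => Dpz /=.
    rewrite Dpz addr0; exact: lexx.
  case: (leqP K 1) => Kc; first by case/eqP: Dpz; exact: DpK.
  have lK := lnK_gt0 R Kc.
  have Dpp : 0 < D T.-1 by rewrite lt_neqAle eq_sym Dpz Dp0.
  have := Phi_ub ell K1 T (divr_gt0 lK Dpp).
  have -> : lnK / (lnK / D T.-1) = D T.-1 by field; rewrite !gt_eqF.
  done.
have mono := D_pred_le (leqnn T).
have [D0 _ Dq] := Delta_props K1 hl (leqnn T).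
have V0 : 0 <= ah_V ell T by apply: sumr_ge0 => s _; exact: v_ge0.
have l0 := lnK_ge0 R K1.
have b0 : 0 <= 2 / 3 * lnK + 1 by lra.
have := sqrt_bound D0 (mulr_ge0 l0 V0) b0 Dq.
rewrite mulrC => SB.
rewrite /ah_regret HS.
lra.
Qed.

End Main3.

Unset Implicit Arguments.

Theorem theorem6 (R : realType) (K T : nat) (ell : nat -> 'I_K -> R) :
  (1 <= K)%N -> (1 <= T)%N ->
  (forall (t : nat) (k : 'I_K), (1 <= t <= T)%N -> 0 <= ell t k <= 1) ->
  ah_regret ell T <=
    2 * Num.sqrt (ah_V ell T * ln (K%:R : R)) + 4 / 3 * ln (K%:R : R) + 2.
Proof. by move=> K1 T1 hl; exact: final_bound. Qed.
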